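(* The orbit space $\mathbb{R}P^5/\mathbb{Z}_2^4$ is homeomorphic to the join $S^2\ast\mathbb{R}P^2$.
   Context: The group $\mathbb{Z}_2^4=\{\pm1\}^4$ acts on $\mathbb{R}P^5$, with homogeneous coordinates $[x_{12}:x_{13}:x_{14}:x_{23}:x_{24}:x_{34}]$, by $x_{ij}\mapsto\epsilon_i\epsilon_jx_{ij}$, i.e. via the composition of the second symmetric power $\mathbb{Z}_2^4\to\mathbb{Z}_2^6$ with the canonical coordinatewise action of $\mathbb{Z}_2^6$ on $\mathbb{R}P^5$. *)

(* Defs.v *)
From HB Require Import structures.
From mathcomp Require Import all_boot all_order all_algebra generic_quotient.
From mathcomp Require Import all_classical all_reals all_analysis.
From mathcomp Require Import subtype_topology quotient_topology.

Set Implicit Arguments.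
Unset Strict Implicit.
Unset Printing Implicit Defensive.

Import Order.TTheory GRing.Theory Num.Theory.
Local Open Scope classical_set_scope.
Local Open Scope ring_scope.
Local Open Scope quotient_scope.

Section GenQuot.
Context {T : topologicalType} (r : T -> T -> Prop).

Definition eqclos (x y : T) : Prop :=
  forall e : T -> T -> Prop,
    (forall a b, r a b -> e a b) ->
    (forall a, e a a) ->
    (forall a b, e a b -> e b a) ->
    (forall a b c, e a b -> e b c -> e a c) -> e x y.

Definition eqclosb (x y : T) : bool := `[< eqclos x y >].

Lemma eqclosb_refl : reflexive eqclosb.
Proof. by move=> x; apply/asboolP => e _ hr _ _; exact: hr. Qed.

Lemma eqclosb_sym : symmetric eqclosb.
Proof.
have H : forall x y, eqclosb x y -> eqclosb y x.
  move=> x y /asboolP h; apply/asboolP => e h1 h2 h3 h4.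
  by apply: (h3); exact: (h e h1 h2 h3 h4).
by move=> x y; apply/idP/idP; exact: H.
Qed.

Lemma eqclosb_trans : transitive eqclosb.
Proof.
move=> y x z /asboolP h1 /asboolP h2; apply/asboolP => e a b c d.
by apply: (d _ y); [exact: (h1 e a b c d)|exact: (h2 e a b c d)].
Qed.

Definition eqclos_rel := EquivRel eqclosb eqclosb_refl eqclosb_sym eqclosb_trans.

Definition gquot := {eq_quot eqclos_rel}.
HB.instance Definition _ := Topological.copy gquot (quotient_topology gquot).
HB.instance Definition _ := Quotient.on gquot.
End GenQuot.

Definition homeomorphic (X Y : topologicalType) : Prop :=
  exists (f : X -> Y) (g : Y -> X),
    [/\ continuous f, continuous g, cancel f g & cancel g f].

Unset Implicit Arguments.
Section Spaces.
Variable R : realType.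

Definition Rn (n : nat) : normedModType R := 'rV[R]_n.

(* unit sphere S^{n-1} in R^n (Euclidean norm), with subspace topology *)
Definition sphere_set (n : nat) : set (Rn n) :=
  [set x | \sum_(i < n) x ord0 i ^+ 2 = 1].
Definition sphere (n : nat) : topologicalType := set_type (sphere_set n).

(* real projective space RP^{n-1} = S^{n-1} / (x ~ -x) *)
Definition RP (n : nat) : topologicalType :=
  gquot (fun x y : sphere n => \val y = - \val x).

(* coordinates x_{ij}, i<j in {0..3}, of R^6 in the order
   x01, x02, x03, x12, x13, x23 *)
Definition pair_fst (k : 'I_6) : 'I_4 :=
  inord (nth 0%N [:: 0; 0; 0; 1; 1; 2]%N k).
Definition pair_snd (k : 'I_6) : 'I_4 :=
  inord (nth 0%N [:: 1; 2; 3; 2; 3; 3]%N k).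

(* element eps of Z_2^4 = {+-1}^4 encoded as eps : {ffun 'I_4 -> bool},
   eps_i = (-1)^(eps i) *)
Definition sgn (eps : {ffun 'I_4 -> bool}) (i : 'I_4) : R := (-1) ^+ eps i.

Definition act_vec (eps : {ffun 'I_4 -> bool}) (x : Rn 6) : Rn 6 :=
  \row_k (sgn eps (pair_fst k) * sgn eps (pair_snd k) * x ord0 k).

Definition act_rel (q q' : RP 6) : Prop :=
  exists (eps : {ffun 'I_4 -> bool}) (x y : sphere 6),
    [/\ \pi_(RP 6) x = q, \pi_(RP 6) y = q' & \val y = act_vec eps (\val x)].

Definition orbit_space : topologicalType := gquot act_rel.

Definition unit_interval_set : set R^o := [set t : R | 0 <= t <= 1].
Definition unit_interval : topologicalType := set_type unit_interval_set.

Definition join_rel (X Y : topologicalType)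
    (a b : (X * (Y * unit_interval))%type) : Prop :=
  (\val a.2.2 = 0 /\ \val b.2.2 = 0 /\ a.1 = b.1) \/
  (\val a.2.2 = 1 /\ \val b.2.2 = 1 /\ a.2.1 = b.2.1).

Definition join (X Y : topologicalType) : topologicalType :=
  gquot (@join_rel X Y).

End Spaces.

(* Main.v *)
Require Import Defs.
From HB Require Import structures.
From mathcomp Require Import all_boot all_order all_algebra generic_quotient.
From mathcomp Require Import all_classical all_reals all_analysis.
From mathcomp Require Import subtype_topology quotient_topology.
From mathcomp Require Import ring lra.
Set Implicit Arguments.
Unset Strict Implicit.
Unset Printing Implicit Defensive.
Import Order.TTheory GRing.Theory Num.Theory.
Import numFieldTopology.Exports numFieldNormedType.Exports.
Local Open Scope classical_set_scope.
Local Open Scope ring_scope.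
Local Open Scope quotient_scope.

Section G.
Context {T : topologicalType} (r : T -> T -> Prop).

Lemma gq_eq a b : r a b -> \pi_(gquot r) a = \pi_(gquot r) b.
Proof.
move=> h; apply/eqmodP; apply/asboolP => e h1 _ _ _; exact: h1.
Qed.

Lemma gq_eqclos a b : \pi_(gquot r) a = \pi_(gquot r) b -> eqclos r a b.
Proof. by move/eqmodP => /asboolP. Qed.

Lemma gq_inv {Z} (f : T -> Z) : (forall a b, r a b -> f a = f b) ->
  forall a b, \pi_(gquot r) a = \pi_(gquot r) b -> f a = f b.
Proof.
move=> hf a b /gq_eqclos h; apply: (h (fun a b => f a = f b)).
- exact: hf.
- by [].
- by move=> x y ->.
- by move=> x y z -> ->.
Qed.

Lemma gq_repr {Z} (f : T -> Z) : (forall a b, r a b -> f a = f b) ->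
  forall a, f (repr (\pi_(gquot r) a)) = f a.
Proof. by move=> hf a; apply: (gq_inv hf); rewrite reprK. Qed.

Lemma gq_pi_cont : continuous (\pi_(gquot r)).
Proof. exact: (@pi_continuous T (gquot r)). Qed.

Lemma gq_cont {Z : topologicalType} (f : T -> Z) : continuous f ->
  (forall a b, r a b -> f a = f b) ->
  continuous (fun q : gquot r => f (repr q)).
Proof.
move=> cf hf; apply/(@quotient_continuous T (gquot r)).
have -> : ((fun q : gquot r => f (repr q)) \o \pi_(gquot r)) = f.
  by apply: funext => a /=; exact: gq_repr.
exact: cf.
Qed.
End G.

Lemma homeo_emb (X Y Z : topologicalType) (phi : X -> Z) (psi : Y -> Z) :
  continuous phi -> continuous psi -> injective phi -> injective psi ->
  compact [set: X] -> compact [set: Y] -> hausdorff_space Z ->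
  (forall x, exists y, psi y = phi x) -> (forall y, exists x, phi x = psi y) ->
  homeomorphic X Y.
Proof.
move=> cphi cpsi iphi ipsi cX cY hZ e1 e2.
have [f hf] := choice e1.
have [g hg] := choice e2.
have fgK : cancel f g by move=> x; apply: iphi; rewrite hg hf.
have gfK : cancel g f by move=> y; apply: ipsi; rewrite hf hg.
have key : forall (A B : topologicalType) (a : A -> Z) (b : B -> Z) (h : A -> B),
    continuous a -> continuous b -> compact [set: B] ->
    (forall x, b (h x) = a x) -> injective b -> continuous h.
  move=> A B a b h ca cb cB hh ib; apply/continuous_closedP => C cC.
  have cptC : compact C by apply: (subclosed_compact cC cB).
  have : compact (b @` C).
    apply: continuous_compact => //; apply: continuous_subspaceT => y; exact: cb.
  move=> /(compact_closed hZ) cbC.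
  have -> : h @^-1` C = a @^-1` (b @` C).
    apply/seteqP; split => x /=.
      by move=> Chx; exists (h x) => //.
    by move=> [y Cy]; rewrite -hh => /ib <-.
  exact: (closed_comp _ cbC).
exists f, g; split => //.
- exact: (key _ _ phi psi f).
- exact: (key _ _ psi phi g).
Qed.

Lemma compact_set_type (X : topologicalType) (A : set X) :
  compact A -> compact [set: set_type A].
Proof.
move=> cA; have [A0|/set0P [a0 Aa0]] := eqVneq A set0.
  have -> : [set: set_type A] = set0.
    apply/seteqP; split => // -[x hx]; exfalso; move: hx; rewrite inE A0 //.
  exact: compact0.
pose h (x : X) : set_type A :=
  match pselect (A x) with left hx => exist _ x (mem_set hx)
  | right _ => exist _ a0 (mem_set Aa0) end.
have hval : forall y : set_type A, h (\val y) = y.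
  move=> [y hy]; rewrite /h /=; case: pselect => hy' //=.
  - by congr exist; exact: Prop_irrelevance.
  - by exfalso; apply: hy'; move: hy; rewrite inE.
have -> : [set: set_type A] = h @` A.
  apply/seteqP; split => // y _; exists (\val y); last exact: hval.
  by case: y => y; rewrite /= inE.
apply: continuous_compact => //.
apply/subspace_sigL_continuousP.
have -> : sigL A h = id.
  by apply: funext => y; rewrite /sigL /= hval.
by move=> x; exact: cvg_id.
Qed.

Lemma mx_cont (T : topologicalType) (K : topologicalType) m n
  (f : T -> 'M[K]_(m, n)) : (forall i j, continuous (fun x => f x i j)) ->
  continuous f.
Proof.
move=> fc x A [P Px sPA]; rewrite nbhs_simpl /=.
have : \forall y \near x, forall i j, P i j (f y i j).
  apply: filter_forall => i; apply: filter_forall => j.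
  exact: (fc i j x (P i j) (Px i j)).
by apply: filterS => y h; apply: sPA.
Qed.

Section RC.
Context {R : realType} {T : topologicalType}.
Implicit Types f g : T -> R.
Lemma cD f g : continuous f -> continuous g -> continuous (fun x => f x + g x).
Proof. by move=> cf cg x; apply: cvgD; [exact: cf|exact: cg]. Qed.
Lemma cB f g : continuous f -> continuous g -> continuous (fun x => f x - g x).
Proof. by move=> cf cg x; apply: cvgB; [exact: cf|exact: cg]. Qed.
Lemma cM f g : continuous f -> continuous g -> continuous (fun x => f x * g x).
Proof. by move=> cf cg x; apply: cvgM; [exact: cf|exact: cg]. Qed.
Lemma cC (c : R) : continuous (fun _ : T => c).
Proof. exact: cst_continuous. Qed.
Lemma cV f : continuous f -> (forall x, f x != 0) -> continuous (fun x => (f x)^-1).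
Proof. by move=> cf h x; apply: cvgV; [exact: h|exact: cf]. Qed.
Lemma cS f : continuous f -> continuous (fun x => Num.sqrt (f x)).
Proof. move=> cf x; apply: continuous_comp; [exact: cf|exact: sqrt_continuous]. Qed.
Lemma cX f : continuous f -> continuous (fun x => f x ^+ 2).
Proof.
move=> cf; have -> : (fun x => f x ^+ 2) = (fun x => f x * f x).
  by apply: funext => x; rewrite expr2.
exact: cM.
Qed.
End RC.

Section C.
Variable R : realType.
Definition co n (v : Rn R n.+1) (k : nat) : R := v ord0 (inord k).

Lemma sum3E (f : 'I_3 -> R) : \sum_(i < 3) f i = f (inord 0) + f (inord 1) + f (inord 2).
Proof.
rewrite !big_ord_recr big_ord0 /= add0r.
by congr (_ + _ + _); congr f; apply/val_inj; rewrite /= inordK.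
Qed.

Lemma sum6E (f : 'I_6 -> R) : \sum_(i < 6) f i =
  f (inord 0) + f (inord 1) + f (inord 2) + f (inord 3) + f (inord 4) + f (inord 5).
Proof.
rewrite !big_ord_recr big_ord0 /= add0r.
by congr (_ + _ + _ + _ + _ + _); congr f; apply/val_inj; rewrite /= inordK.
Qed.

Definition s (eps : {ffun 'I_4 -> bool}) (i : nat) : R := sgn R eps (inord i).

Lemma act_co eps v k : (k < 6)%N ->
  co (@act_vec R eps v) k = s eps (nth 0%N [:: 0; 0; 0; 1; 1; 2]%N k)
     * s eps (nth 0%N [:: 1; 2; 3; 2; 3; 3]%N k) * co v k.
Proof.
by move=> hk; rewrite /co /act_vec /s !mxE /pair_fst /pair_snd !inordK.
Qed.
End C.

Section Alg.
Variable R : realType.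
Implicit Types a b p q x y : R.

Lemma sq_eq_nonneg x y : 0 <= x -> 0 <= y -> x ^+ 2 = y ^+ 2 -> x = y.
Proof.
move=> hx hy /eqP; rewrite eqf_sqr => /orP[/eqP //|/eqP hxy].
lra.
Qed.

Lemma sq_cases x y : x ^+ 2 = y ^+ 2 -> x = y \/ x = - y.
Proof. by move/eqP; rewrite eqf_sqr => /orP[/eqP|/eqP]; [left|right]. Qed.

Lemma pair_sq (p q p' q' : R) :
  p' ^+ 2 - q' ^+ 2 = p ^+ 2 - q ^+ 2 -> p' * q' = p * q ->
  exists d : bool, p' = (-1) ^+ d * p /\ q' = (-1) ^+ d * q.
Proof.
move=> h1 h2.
have hs : p' ^+ 2 + q' ^+ 2 = p ^+ 2 + q ^+ 2.
  apply: sq_eq_nonneg; [nra|nra|].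
  have -> : (p' ^+ 2 + q' ^+ 2) ^+ 2 = (p' ^+ 2 - q' ^+ 2) ^+ 2 + 4 * (p' * q') ^+ 2 by ring.
  rewrite h1 h2; ring.
have hp : p' ^+ 2 = p ^+ 2 by lra.
have hq : q' ^+ 2 = q ^+ 2 by lra.
have [p0|p0] := eqVneq p 0.
  have p'0 : p' = 0 by apply/eqP; rewrite -sqrf_eq0 hp p0 expr2 mul0r.
  case: (sq_cases hq) => ->.
    by exists false; split; rewrite ?p'0 ?p0; ring.
  by exists true; split; rewrite ?p'0 ?p0; ring.
case: (sq_cases hp) => ep.
  exists false; rewrite expr0 !mul1r; split => //.
  by apply: (mulfI p0); rewrite -h2 ep.
exists true; rewrite expr1 !mulN1r; split => //.
apply: (mulfI p0); rewrite mulrN -h2 ep; ring.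
Qed.

Lemma sq_sign x y : x ^+ 2 = y ^+ 2 -> exists e : bool, x = (-1) ^+ e * y.
Proof.
by case/sq_cases => ->; [exists false|exists true]; rewrite ?expr0 ?expr1 ?mul1r ?mulN1r.
Qed.

Lemma sign_prop (e : bool) x y x' y' : x != 0 -> x' = (-1) ^+ e * x ->
  x' * y' = x * y -> y' = (-1) ^+ e * y.
Proof.
move=> x0 hx h; apply: (mulfI x0).
have hs : ((-1) ^+ e) ^+ 2 = 1 :> R by rewrite sqrr_sign.
have : (-1) ^+ e * x * y' = x * y by rewrite -hx.
move=> h'; transitivity (((-1) ^+ e) ^+ 2 * (x * y')); first by rewrite hs mul1r.
transitivity ((-1) ^+ e * ((-1) ^+ e * x * y')); first ring.
rewrite h'; ring.
Qed.

Lemma rank1 (b0 b1 b2 c0 c1 c2 : R) :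
  c0 ^+ 2 = b0 ^+ 2 -> c1 ^+ 2 = b1 ^+ 2 -> c2 ^+ 2 = b2 ^+ 2 ->
  c0 * c1 = b0 * b1 -> c0 * c2 = b0 * b2 -> c1 * c2 = b1 * b2 ->
  exists e : bool, [/\ c0 = (-1) ^+ e * b0, c1 = (-1) ^+ e * b1 & c2 = (-1) ^+ e * b2].
Proof.
move=> h0 h1 h2 h01 h02 h12.
have z : forall x y : R, x ^+ 2 = y ^+ 2 -> y = 0 -> x = 0.
  by move=> x y hxy y0; apply/eqP; rewrite -sqrf_eq0 hxy y0 expr2 mul0r.
have [b00|b00] := eqVneq b0 0; last first.
  have [e he] := sq_sign h0; exists e; split => //.
    exact: (sign_prop b00 he h01).
  exact: (sign_prop b00 he h02).
have c00 := z _ _ h0 b00.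
have [b10|b10] := eqVneq b1 0; last first.
  have [e he] := sq_sign h1; exists e; split => //.
    by rewrite c00 b00 mulr0.
  exact: (sign_prop b10 he h12).
have c10 := z _ _ h1 b10.
have [e he] := sq_sign h2; exists e; split => //.
  by rewrite c00 b00 mulr0.
by rewrite c10 b10 mulr0.
Qed.
End Alg.

Section Core.
Variable R : realType.
Definition AA (p q : R) := p ^+ 2 - q ^+ 2.
Definition BB (p q : R) := 2 * p * q.
Definition NN (p0 q0 p1 q1 p2 q2 : R) :=
  AA p0 q0 ^+ 2 + BB p0 q0 ^+ 2 + AA p1 q1 ^+ 2 + BB p1 q1 ^+ 2 + AA p2 q2 ^+ 2 + BB p2 q2 ^+ 2.

Lemma NN_pos p0 q0 p1 q1 p2 q2 :
  p0 ^+ 2 + q0 ^+ 2 + p1 ^+ 2 + q1 ^+ 2 + p2 ^+ 2 + q2 ^+ 2 = 1 ->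
  0 < NN p0 q0 p1 q1 p2 q2.
Proof.
move=> h; rewrite /NN /AA /BB.
set m0 := p0 ^+ 2 + q0 ^+ 2; set m1 := p1 ^+ 2 + q1 ^+ 2; set m2 := p2 ^+ 2 + q2 ^+ 2.
have -> : (p0 ^+ 2 - q0 ^+ 2) ^+ 2 + (2 * p0 * q0) ^+ 2 + (p1 ^+ 2 - q1 ^+ 2) ^+ 2 +
  (2 * p1 * q1) ^+ 2 + (p2 ^+ 2 - q2 ^+ 2) ^+ 2 + (2 * p2 * q2) ^+ 2 =
  m0 ^+ 2 + m1 ^+ 2 + m2 ^+ 2 by rewrite /m0 /m1 /m2; ring.
have hm : m0 + m1 + m2 = 1 by rewrite /m0 /m1 /m2 -h; ring.
have H : 0 <= (m0 - m1) ^+ 2 + (m1 - m2) ^+ 2 + (m0 - m2) ^+ 2.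
  by rewrite !addr_ge0 ?sqr_ge0.
have E : 3 * (m0 ^+ 2 + m1 ^+ 2 + m2 ^+ 2) =
  (m0 + m1 + m2) ^+ 2 + ((m0 - m1) ^+ 2 + (m1 - m2) ^+ 2 + (m0 - m2) ^+ 2) by ring.
rewrite hm expr1n in E; lra.
Qed.

Lemma m_id p q : (p ^+ 2 + q ^+ 2) ^+ 2 = AA p q ^+ 2 + BB p q ^+ 2.
Proof. rewrite /AA /BB; ring. Qed.

Lemma sgn2 (e : bool) : ((-1) ^+ e) * ((-1) ^+ e) = 1 :> R.
Proof. by rewrite -expr2 sqrr_sign. Qed.

Lemma pair_step (e : bool) (p q p' q' : R) : AA p' q' = AA p q ->
  BB p' q' = (-1) ^+ e * BB p q ->
  exists d : bool, p' = (-1) ^+ d * p /\ q' = (-1) ^+ (d (+) e) * q.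
Proof.
rewrite /AA /BB => hA hB.
have [d [hp hq]] : exists d : bool, p' = (-1) ^+ d * p /\ (-1) ^+ e * q' = (-1) ^+ d * q.
  apply: pair_sq.
    have -> : ((-1) ^+ e * q') ^+ 2 = q' ^+ 2.
      by rewrite exprMn sqrr_sign mul1r.
    exact: hA.
  have h2 : p' * q' = (-1) ^+ e * (p * q).
    have : 2 * (p' * q') = 2 * ((-1) ^+ e * (p * q)).
      by rewrite mulrA hB; ring.
    have two0 : (2:R) != 0 by rewrite pnatr_eq0.
    by move/(mulfI two0).
  transitivity ((-1) ^+ e * (p' * q')); first ring.
  rewrite h2; transitivity (((-1) ^+ e * (-1) ^+ e) * (p * q)); first ring.
  by rewrite sgn2 mul1r.
exists d; split => //.
rewrite signr_addb.
transitivity (((-1) ^+ e * (-1) ^+ e) * q'); first by rewrite sgn2 mul1r.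
transitivity ((-1) ^+ e * ((-1) ^+ e * q')); first ring.
rewrite hq; ring.
Qed.

Lemma core_inj (p0 q0 p1 q1 p2 q2 p0' q0' p1' q1' p2' q2' : R) :
  p0 ^+ 2 + q0 ^+ 2 + p1 ^+ 2 + q1 ^+ 2 + p2 ^+ 2 + q2 ^+ 2 = 1 ->
  p0' ^+ 2 + q0' ^+ 2 + p1' ^+ 2 + q1' ^+ 2 + p2' ^+ 2 + q2' ^+ 2 = 1 ->
  let N := NN p0 q0 p1 q1 p2 q2 in let N' := NN p0' q0' p1' q1' p2' q2' in
  AA p0 q0 / Num.sqrt N = AA p0' q0' / Num.sqrt N' ->
  AA p1 q1 / Num.sqrt N = AA p1' q1' / Num.sqrt N' ->
  AA p2 q2 / Num.sqrt N = AA p2' q2' / Num.sqrt N' ->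
  BB p0 q0 ^+ 2 / N = BB p0' q0' ^+ 2 / N' ->
  BB p1 q1 ^+ 2 / N = BB p1' q1' ^+ 2 / N' ->
  BB p2 q2 ^+ 2 / N = BB p2' q2' ^+ 2 / N' ->
  BB p0 q0 * BB p1 q1 / N = BB p0' q0' * BB p1' q1' / N' ->
  BB p0 q0 * BB p2 q2 / N = BB p0' q0' * BB p2' q2' / N' ->
  BB p1 q1 * BB p2 q2 / N = BB p1' q1' * BB p2' q2' / N' ->
  exists e : bool,
    (exists d : bool, p0' = (-1) ^+ d * p0 /\ q0' = (-1) ^+ (d (+) e) * q0) /\
    (exists d : bool, p1' = (-1) ^+ d * p1 /\ q1' = (-1) ^+ (d (+) e) * q1) /\
    (exists d : bool, p2' = (-1) ^+ d * p2 /\ q2' = (-1) ^+ (d (+) e) * q2).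
Proof.
move=> hS hS' N N' hA0 hA1 hA2 hB0 hB1 hB2 hB01 hB02 hB12.
have Np : 0 < N := NN_pos hS.
have Np' : 0 < N' := NN_pos hS'.
set s := Num.sqrt N; set s' := Num.sqrt N'.
have {hA0}hA0 : AA p0 q0 / s = AA p0' q0' / s' := hA0.
have {hA1}hA1 : AA p1 q1 / s = AA p1' q1' / s' := hA1.
have {hA2}hA2 : AA p2 q2 / s = AA p2' q2' / s' := hA2.
have sp : 0 < s by rewrite sqrtr_gt0.
have sp' : 0 < s' by rewrite sqrtr_gt0.
have hs : s ^+ 2 = N by rewrite sqr_sqrtr // ltW.
have hs' : s' ^+ 2 = N' by rewrite sqr_sqrtr // ltW.
have key : forall (p q : R) (t : R), 0 < t ->
    ((p ^+ 2 + q ^+ 2) / t) ^+ 2 = (AA p q / t) ^+ 2 + BB p q ^+ 2 / t ^+ 2.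
  move=> p q t tp; rewrite !expr_div_n m_id; rewrite mulrDl //.
have mk : forall (p q p' q' : R), AA p q / s = AA p' q' / s' ->
    BB p q ^+ 2 / N = BB p' q' ^+ 2 / N' ->
    (p ^+ 2 + q ^+ 2) / s = (p' ^+ 2 + q' ^+ 2) / s'.
  move=> p q p' q' ha hb; apply: sq_eq_nonneg.
  - by apply: divr_ge0; [nra|exact: ltW].
  - by apply: divr_ge0; [nra|exact: ltW].
  by rewrite !key // hs hs' ha hb.
have := mk _ _ _ _ hA0 hB0; have := mk _ _ _ _ hA1 hB1; have := mk _ _ _ _ hA2 hB2.
move=> e2 e1 e0.
have ss : s^-1 = s'^-1.
  have : (p0 ^+ 2 + q0 ^+ 2) / s + (p1 ^+ 2 + q1 ^+ 2) / s + (p2 ^+ 2 + q2 ^+ 2) / s =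
         (p0' ^+ 2 + q0' ^+ 2) / s' + (p1' ^+ 2 + q1' ^+ 2) / s' + (p2' ^+ 2 + q2' ^+ 2) / s'.
    by rewrite e0 e1 e2.
  rewrite -!mulrDl.
  have -> : p0 ^+ 2 + q0 ^+ 2 + (p1 ^+ 2 + q1 ^+ 2) + (p2 ^+ 2 + q2 ^+ 2) = 1 by lra.
  have -> : p0' ^+ 2 + q0' ^+ 2 + (p1' ^+ 2 + q1' ^+ 2) + (p2' ^+ 2 + q2' ^+ 2) = 1 by lra.
  by rewrite !mul1r.
have ess : s = s' by apply: invr_inj.
have eN : N = N' by rewrite -hs -hs' ess.
have sV : s^-1 != 0 by rewrite invr_neq0 // gt_eqF.
have NV : N^-1 != 0 by rewrite invr_neq0 // gt_eqF.
rewrite -ess in hA0 hA1 hA2; rewrite -eN in hB0 hB1 hB2 hB01 hB02 hB12.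
move/(mulIf sV): hA0 => hA0; move/(mulIf sV): hA1 => hA1; move/(mulIf sV): hA2 => hA2.
move/(mulIf NV): hB0 => hB0; move/(mulIf NV): hB1 => hB1; move/(mulIf NV): hB2 => hB2.
move/(mulIf NV): hB01 => hB01; move/(mulIf NV): hB02 => hB02; move/(mulIf NV): hB12 => hB12.
have [e [h0 h1 h2]] := rank1 (esym hB0) (esym hB1) (esym hB2) (esym hB01) (esym hB02) (esym hB12).
exists e; split; first exact: pair_step.
by split; apply: pair_step.
Qed.
End Core.

Section Orb.
Variable R : realType.

Definition Zv (a0 a1 a2 b0 b1 b2 c01 c02 c12 : R) : 'rV[R]_9 :=
  \row_(i < 9) nth 0 [:: a0; a1; a2; b0; b1; b2; c01; c02; c12] i.

Lemma Zv_inj a0 a1 a2 b0 b1 b2 c01 c02 c12 a0' a1' a2' b0' b1' b2' c01' c02' c12' :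
  Zv a0 a1 a2 b0 b1 b2 c01 c02 c12 = Zv a0' a1' a2' b0' b1' b2' c01' c02' c12' ->
  [/\ a0 = a0', a1 = a1', a2 = a2', b0 = b0' & [/\ b1 = b1', b2 = b2', c01 = c01', c02 = c02' & c12 = c12']].
Proof.
move/rowP => h.
have H : forall k, (k < 9)%N -> nth 0 [:: a0; a1; a2; b0; b1; b2; c01; c02; c12] k =
   nth 0 [:: a0'; a1'; a2'; b0'; b1'; b2'; c01'; c02'; c12'] k.
  by move=> k hk; have := h (Ordinal hk); rewrite !mxE.
by split; [exact: (H 0%N)|exact: (H 1%N)|exact: (H 2%N)|exact: (H 3%N)|
  split; [exact: (H 4%N)|exact: (H 5%N)|exact: (H 6%N)|exact: (H 7%N)|exact: (H 8%N)]].
Qed.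

Lemma rowv6 (v w : Rn R 6) : (forall k, (k < 6)%N -> co v k = co w k) -> v = w.
Proof.
move=> h; apply/rowP => i; have := h i (ltn_ord i).
by rewrite /co inord_val.
Qed.

Definition Nv (v : Rn R 6) := NN (co v 0) (co v 5) (co v 1) (co v 4) (co v 2) (co v 3).

Definition Phi (p0 q0 p1 q1 p2 q2 : R) : 'rV[R]_9 :=
  let N := NN p0 q0 p1 q1 p2 q2 in
  Zv (AA p0 q0 / Num.sqrt N) (AA p1 q1 / Num.sqrt N) (AA p2 q2 / Num.sqrt N)
     (BB p0 q0 ^+ 2 / N) (BB p1 q1 ^+ 2 / N) (BB p2 q2 ^+ 2 / N)
     (BB p0 q0 * BB p1 q1 / N) (BB p0 q0 * BB p2 q2 / N) (BB p1 q1 * BB p2 q2 / N).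

Definition phiv (v : Rn R 6) : 'rV[R]_9 :=
  Phi (co v 0) (co v 5) (co v 1) (co v 4) (co v 2) (co v 3).

Lemma sphere6 (x : sphere R 6) :
  let v := \val x in
  co v 0 ^+ 2 + co v 5 ^+ 2 + co v 1 ^+ 2 + co v 4 ^+ 2 + co v 2 ^+ 2 + co v 3 ^+ 2 = 1.
Proof.
move=> v; have := valP x; rewrite inE /sphere_set /= sum6E /co -/v => <-.
ring.
Qed.

Lemma AA_sgn (a b p q : R) : a ^+ 2 = 1 -> b ^+ 2 = 1 -> AA (a * p) (b * q) = AA p q.
Proof. by move=> ha hb; rewrite /AA !exprMn ha hb !mul1r. Qed.
Lemma BB_sgn (a b p q : R) : BB (a * p) (b * q) = (a * b) * BB p q.
Proof. rewrite /BB; ring. Qed.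

Lemma Phi_sgn (a0 b0 a1 b1 a2 b2 d p0 q0 p1 q1 p2 q2 : R) :
  a0 ^+ 2 = 1 -> b0 ^+ 2 = 1 -> a1 ^+ 2 = 1 -> b1 ^+ 2 = 1 -> a2 ^+ 2 = 1 -> b2 ^+ 2 = 1 ->
  a0 * b0 = d -> a1 * b1 = d -> a2 * b2 = d -> d ^+ 2 = 1 ->
  Phi (a0 * p0) (b0 * q0) (a1 * p1) (b1 * q1) (a2 * p2) (b2 * q2) = Phi p0 q0 p1 q1 p2 q2.
Proof.
move=> ha0 hb0 ha1 hb1 ha2 hb2 d0 d1 d2 dd.
rewrite /Phi /NN !AA_sgn // !BB_sgn d0 d1 d2.
have E : forall x y : R, (d * x) * (d * y) = x * y.
  by move=> x y; transitivity (d ^+ 2 * (x * y)); [ring|rewrite dd mul1r].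
have E2 : forall x : R, (d * x) ^+ 2 = x ^+ 2 by move=> x; rewrite expr2 E -expr2.
by rewrite !E2 !E.
Qed.

Lemma phiv_act eps v : phiv (@act_vec R eps v) = phiv v.
Proof.
rewrite /phiv !act_co //=.
have sq i : s R eps i ^+ 2 = 1 by rewrite /s /sgn sqrr_sign.
apply: (@Phi_sgn _ _ _ _ _ _ (s R eps 0 * s R eps 1 * (s R eps 2 * s R eps 3))); rewrite ?exprMn ?sq ?mulr1 //; ring.
Qed.
Definition mkeps (b0 b1 b2 b3 : bool) : {ffun 'I_4 -> bool} :=
  [ffun i : 'I_4 => nth false [:: b0; b1; b2; b3] i].

Lemma s_mkeps b0 b1 b2 b3 i : (i < 4)%N ->
  s R (mkeps b0 b1 b2 b3) i = (-1) ^+ (nth false [:: b0; b1; b2; b3] i).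
Proof. by move=> hi; rewrite /s /sgn /mkeps ffunE inordK. Qed.

Lemma co_scale n (c : R) (w : Rn R n.+1) k : co (c *: w) k = c * co w k.
Proof. by rewrite /co mxE. Qed.

Lemma phiv_inj (x y : sphere R 6) : phiv (\val x) = phiv (\val y) ->
  exists (eps : {ffun 'I_4 -> bool}) (b : bool),
    @act_vec R eps (\val x) = (-1) ^+ b *: \val y.
Proof.
rewrite /phiv /Phi => /Zv_inj [hA0 hA1 hA2 hB0 [hB1 hB2 h01 h02 h12]].
have [e [[d0 [p0 q0]] [[d1 [p1 q1]] [d2 [p2 q2]]]]] :=
  core_inj (sphere6 x) (sphere6 y) hA0 hA1 hA2 hB0 hB1 hB2 h01 h02 h12.
set E := d0 (+) d1 (+) d2 (+) e.
exists (mkeps false (E (+) d0) (E (+) d1) (E (+) d2)), E.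
apply: rowv6 => k hk; rewrite act_co // co_scale.
rewrite !s_mkeps; last first.
all: try by case: k hk => [|[|[|[|[|[|k]]]]]].
move: p0 q0 p1 q1 p2 q2; rewrite /E; clear E hA0 hA1 hA2 hB0 hB1 hB2 h01 h02 h12.
case: k hk => [|[|[|[|[|[|k]]]]]] //= _.
all: by case: d0 d1 d2 e => [] [] [] [] /= h0 h5 h1 h4 h2 h3;
  rewrite ?h0 ?h1 ?h2 ?h3 ?h4 ?h5; ring.
Qed.
End Orb.

Section Cont.
Variable R : realType.

Lemma cont_Zv (T : topologicalType) (f0 f1 f2 f3 f4 f5 f6 f7 f8 : T -> R) :
  continuous f0 -> continuous f1 -> continuous f2 -> continuous f3 ->
  continuous f4 -> continuous f5 -> continuous f6 -> continuous f7 ->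
  continuous f8 ->
  continuous (fun t => Zv (f0 t) (f1 t) (f2 t) (f3 t) (f4 t) (f5 t) (f6 t) (f7 t) (f8 t)).
Proof.
move=> c0 c1 c2 c3 c4 c5 c6 c7 c8; apply: mx_cont => i j.
have -> : (fun t => Zv (f0 t) (f1 t) (f2 t) (f3 t) (f4 t) (f5 t) (f6 t) (f7 t) (f8 t) i j) =
  (fun t => nth 0 [:: f0 t; f1 t; f2 t; f3 t; f4 t; f5 t; f6 t; f7 t; f8 t] j).
  by apply: funext => t; rewrite mxE.
case: j => [[|[|[|[|[|[|[|[|[|j]]]]]]]]] hj] //=.
Qed.

Lemma cont_Phi (T : topologicalType) (p0 q0 p1 q1 p2 q2 : T -> R) :
  continuous p0 -> continuous q0 -> continuous p1 -> continuous q1 ->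
  continuous p2 -> continuous q2 ->
  (forall t, 0 < NN (p0 t) (q0 t) (p1 t) (q1 t) (p2 t) (q2 t)) ->
  continuous (fun t => Phi (p0 t) (q0 t) (p1 t) (q1 t) (p2 t) (q2 t)).
Proof.
move=> c0 d0 c1 d1 c2 d2 Np; rewrite /Phi.
have cA : forall p q : T -> R, continuous p -> continuous q -> continuous (fun t => AA (p t) (q t)).
  by move=> p q cp cq; rewrite /AA; apply: cB; apply: cX.
have cBB : forall p q : T -> R, continuous p -> continuous q -> continuous (fun t => BB (p t) (q t)).
  by move=> p q cp cq; rewrite /BB; apply: cM => //; apply: cM => //; exact: cC.
have cN : continuous (fun t => NN (p0 t) (q0 t) (p1 t) (q1 t) (p2 t) (q2 t)).
  rewrite /NN; repeat apply: cD; apply: cX; by [apply: cA|apply: cBB].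
have cNV : continuous (fun t => (NN (p0 t) (q0 t) (p1 t) (q1 t) (p2 t) (q2 t))^-1).
  by apply: cV => // t; rewrite gt_eqF.
have cSV : continuous (fun t => (Num.sqrt (NN (p0 t) (q0 t) (p1 t) (q1 t) (p2 t) (q2 t)))^-1).
  by apply: cV => [|t]; [exact: cS|rewrite gt_eqF // sqrtr_gt0].
apply: cont_Zv; apply: cM => //; try apply: cM; try apply: cX;
  by [apply: cA|apply: cBB].
Qed.
End Cont.

Section OrbMap.
Variable R : realType.

Lemma co_cont n k : continuous (fun x : sphere R n.+1 => co (\val x) k).
Proof.
move=> x; apply: (@continuous_comp _ _ _ (fun x : sphere R n.+1 => \val x)
  (fun v : Rn R n.+1 => v ord0 (inord k))).
  exact: initial_continuous.
exact: coord_continuous.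
Qed.

Definition phi_sph (x : sphere R 6) := phiv (\val x).

Lemma phi_sph_cont : continuous phi_sph.
Proof.
apply: cont_Phi; try exact: co_cont.
by move=> x; apply: NN_pos; exact: (sphere6 x).
Qed.

Lemma co_opp n (v : Rn R n.+1) k : co (- v) k = (-1) * co v k.
Proof. by rewrite /co mxE mulN1r. Qed.

Lemma phiv_opp (v : Rn R 6) : phiv (- v) = phiv v.
Proof.
rewrite /phiv !co_opp; apply: (@Phi_sgn _ _ _ _ _ _ _ 1); by rewrite ?sqrrN ?expr1n ?mulN1r ?opprK.
Qed.

Lemma sphere_opp n (x : sphere R n) : (- \val x) \in sphere_set R n.
Proof.
have := valP x; rewrite !inE /sphere_set /= => hx.
rewrite -[RHS]hx; apply: eq_bigr => i _; rewrite mxE sqrrN //.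
Qed.

Definition sopp n (x : sphere R n) : sphere R n := exist _ (- \val x) (sphere_opp x).

Definition rpr n := (fun x y : sphere R n => \val y = - \val x).

Lemma phi_sph_inv (a b : sphere R 6) : rpr a b -> phi_sph a = phi_sph b.
Proof. by rewrite /rpr /phi_sph => ->; rewrite phiv_opp. Qed.

Definition phi_RP (q : RP R 6) := phi_sph (repr q).

Lemma phi_RP_pi (x : sphere R 6) : phi_RP (\pi_(RP R 6) x) = phi_sph x.
Proof. exact: (gq_repr (@phi_sph_inv)). Qed.

Lemma phi_RP_cont : continuous phi_RP.
Proof. exact: (gq_cont phi_sph_cont (@phi_sph_inv)). Qed.

Lemma phi_RP_inv (q q' : RP R 6) : @act_rel R q q' -> phi_RP q = phi_RP q'.
Proof.
move=> [eps [x [y [<- <- hy]]]].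
by rewrite !phi_RP_pi /phi_sph hy phiv_act.
Qed.

Definition phi_orb (o : orbit_space R) := phi_RP (repr o).

Lemma phi_orb_cont : continuous phi_orb.
Proof. exact: (gq_cont phi_RP_cont (@phi_RP_inv)). Qed.

Lemma phi_orb_pi (x : sphere R 6) :
  phi_orb (\pi_(orbit_space R) (\pi_(RP R 6) x)) = phi_sph x.
Proof. by rewrite /phi_orb (gq_repr (@phi_RP_inv)) phi_RP_pi. Qed.

Lemma orb_surj (o : orbit_space R) : exists x : sphere R 6,
  o = \pi_(orbit_space R) (\pi_(RP R 6) x).
Proof. by exists (repr (repr o)); rewrite !reprK. Qed.

Lemma phi_orb_inj : injective phi_orb.
Proof.
move=> o o'; have [x ->] := orb_surj o; have [y ->] := orb_surj o'.
rewrite !phi_orb_pi => /phiv_inj [eps [b hb]].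
apply: gq_eq; case: b hb => hb.
  exists eps, x, (sopp y); split => //.
    by apply: gq_eq; rewrite /rpr /=  opprK.
  by rewrite hb /= expr1 scaleN1r.
exists eps, x, y; split => //.
by rewrite hb expr0 scale1r.
Qed.
End OrbMap.

Section JoinMap.
Variable R : realType.
Local Notation X := (sphere R 3).
Local Notation Y := (RP R 3).
Local Notation I := (unit_interval R).

Definition bq (i j : nat) (y : Y) : R := co (\val (repr y)) i * co (\val (repr y)) j.

Lemma bq_pi i j (x : X) : bq i j (\pi_Y x) = co (\val x) i * co (\val x) j.
Proof.
apply: (gq_repr (f := fun x : X => co (\val x) i * co (\val x) j)).
by move=> a b; rewrite /rpr => ->; rewrite !co_opp; ring.
Qed.

Lemma bq_cont i j : continuous (bq i j).
Proof.
apply: (gq_cont (f := fun x : X => co (\val x) i * co (\val x) j)).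
  by apply: cM; exact: co_cont.
by move=> a b; rewrite /rpr => ->; rewrite !co_opp; ring.
Qed.

Lemma ival_cont : continuous (fun t : I => (\val t : R)).
Proof. exact: initial_continuous. Qed.

Lemma fst_cont (A B : topologicalType) : continuous (@fst A B).
Proof. by move=> x; exact: cvg_fst. Qed.
Lemma snd_cont (A B : topologicalType) : continuous (@snd A B).
Proof. by move=> x; exact: cvg_snd. Qed.

Definition psiv (a : Rn R 3) (y : Y) (t : R) : 'rV[R]_9 :=
  let r := Num.sqrt (1 - t) in
  Zv (r * co a 0) (r * co a 1) (r * co a 2)
     (t * bq 0 0 y) (t * bq 1 1 y) (t * bq 2 2 y)
     (t * bq 0 1 y) (t * bq 0 2 y) (t * bq 1 2 y).

Definition psi_prod (p : (X * (Y * I))%type) : 'rV[R]_9 :=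
  psiv (\val p.1) p.2.1 (\val p.2.2).

Lemma psi_prod_cont : continuous psi_prod.
Proof.
have cc : forall (A B C : topologicalType) (f : A -> B) (g : B -> C),
    continuous f -> continuous g -> continuous (g \o f).
  by move=> A B C f g cf cg x; apply: continuous_comp; [exact: cf|exact: cg].
have ct : continuous (fun p : (X * (Y * I))%type => (\val p.2.2 : R)).
  exact: (cc _ _ _ _ _ (cc _ _ _ _ _ (@snd_cont _ _) (@snd_cont _ _)) ival_cont).
have ca : forall k, continuous (fun p : (X * (Y * I))%type => co (\val p.1) k).
  move=> k; exact: (cc _ _ _ _ _ (@fst_cont _ _) (@co_cont R 2 k)).
have cb : forall i j, continuous (fun p : (X * (Y * I))%type => bq i j p.2.1).
  move=> i j; have h1 := cc _ _ _ _ _ (@snd_cont X (Y * I)%type) (@fst_cont Y I).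
  have h2 := cc _ _ _ _ _ h1 (@bq_cont i j).
  have -> : (fun p : (X * (Y * I))%type => bq i j p.2.1) = bq i j \o (fst \o snd) by [].
  exact: h2.
have cr : continuous (fun p : (X * (Y * I))%type => Num.sqrt (1 - (\val p.2.2 : R))).
  by apply: cS; apply: cB => //; exact: cC.
apply: cont_Zv.
- exact (cM cr (ca 0%N)).
- exact (cM cr (ca 1%N)).
- exact (cM cr (ca 2%N)).
- exact (cM ct (cb 0%N 0%N)).
- exact (cM ct (cb 1%N 1%N)).
- exact (cM ct (cb 2%N 2%N)).
- exact (cM ct (cb 0%N 1%N)).
- exact (cM ct (cb 0%N 2%N)).
- exact (cM ct (cb 1%N 2%N)).
Qed.

Lemma psi_prod_inv a b : @join_rel R X Y a b -> psi_prod a = psi_prod b.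
Proof.
rewrite /psi_prod /psiv => -[[-> [-> ->]]|[-> [-> ->]]].
  by rewrite !mul0r.
by rewrite subrr sqrtr0 !mul0r.
Qed.

Definition psi_J (j : join R X Y) := psi_prod (repr j).

Lemma psi_J_cont : continuous psi_J.
Proof. exact: (gq_cont psi_prod_cont (@psi_prod_inv)). Qed.

Lemma psi_J_pi p : psi_J (\pi_(join R X Y) p) = psi_prod p.
Proof. exact: (gq_repr (@psi_prod_inv)). Qed.
End JoinMap.

Section JoinInj.
Variable R : realType.
Local Notation X := (sphere R 3).
Local Notation Y := (RP R 3).
Local Notation I := (unit_interval R).

Lemma sphere3 (x : X) : co (\val x) 0 ^+ 2 + co (\val x) 1 ^+ 2 + co (\val x) 2 ^+ 2 = 1.
Proof.
have := valP x; rewrite inE /sphere_set /= sum3E /co => h; exact: h.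
Qed.

Lemma rowv3 (v w : Rn R 3) : co v 0 = co w 0 -> co v 1 = co w 1 -> co v 2 = co w 2 -> v = w.
Proof.
move=> h0 h1 h2; apply/rowP => i; have : co v i = co w i.
  by case: i => [[|[|[|i]]] hi] //.
by rewrite /co inord_val.
Qed.

Lemma I_bounds (t : I) : 0 <= (\val t : R) <= 1.
Proof. by have := valP t; rewrite inE /unit_interval_set. Qed.

Lemma y_eq (y y' : Y) (e : bool) :
  co (\val (repr y')) 0 = (-1) ^+ e * co (\val (repr y)) 0 ->
  co (\val (repr y')) 1 = (-1) ^+ e * co (\val (repr y)) 1 ->
  co (\val (repr y')) 2 = (-1) ^+ e * co (\val (repr y)) 2 -> y = y'.
Proof.
move=> h0 h1 h2; rewrite -[y]reprK -[y']reprK.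
case: e h0 h1 h2; rewrite ?expr0 ?expr1 ?mul1r ?mulN1r => h0 h1 h2.
  apply: (@gq_eq _ (fun x y : sphere R 3 => \val y = - \val x)).
  by apply: rowv3; rewrite co_opp mulN1r.
by congr (\pi_Y _); apply: val_inj; apply: rowv3.
Qed.
End JoinInj.

Section JInj.
Variable R : realType.
Local Notation X := (sphere R 3).
Local Notation Y := (RP R 3).
Local Notation I := (unit_interval R).
Local Notation J := (join R X Y).

Lemma join_surj (j : J) : exists p, j = \pi_J p.
Proof. by exists (repr j); rewrite reprK. Qed.

Lemma psi_J_inj : injective (@psi_J R).
Proof.
move=> j j'; have [[a [y t]] ->] := join_surj j; have [[a' [y' t']] ->] := join_surj j'.
rewrite !psi_J_pi /psi_prod /psiv /= => /Zv_inj [h0 h1 h2 hb00 [hb11 hb22 hb01 hb02 hb12]].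
have /andP [t0 t1] := I_bounds t; have /andP [t0' t1'] := I_bounds t'.
set T := (\val t : R) in h0 h1 h2 hb00 hb11 hb22 hb01 hb02 hb12 t0 t1 *.
set T' := (\val t' : R) in h0 h1 h2 hb00 hb11 hb22 hb01 hb02 hb12 t0' t1' *.
have {hb00}hb00 : T * bq 0 0 y = T' * bq 0 0 y' := hb00.
have {hb11}hb11 : T * bq 1 1 y = T' * bq 1 1 y' := hb11.
have {hb22}hb22 : T * bq 2 2 y = T' * bq 2 2 y' := hb22.
have {hb01}hb01 : T * bq 0 1 y = T' * bq 0 1 y' := hb01.
have {hb02}hb02 : T * bq 0 2 y = T' * bq 0 2 y' := hb02.
have {hb12}hb12 : T * bq 1 2 y = T' * bq 1 2 y' := hb12.
set r := Num.sqrt (1 - T) in h0 h1 h2.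
set r' := Num.sqrt (1 - T') in h0 h1 h2.
have hr : r ^+ 2 = 1 - T by rewrite sqr_sqrtr // subr_ge0.
have hr' : r' ^+ 2 = 1 - T' by rewrite sqr_sqrtr // subr_ge0.
have sa := sphere3 a; have sa' := sphere3 a'.
have eT : T = T'.
  have : (r * co (\val a) 0) ^+ 2 + (r * co (\val a) 1) ^+ 2 + (r * co (\val a) 2) ^+ 2 =
         (r' * co (\val a') 0) ^+ 2 + (r' * co (\val a') 1) ^+ 2 + (r' * co (\val a') 2) ^+ 2.
    by rewrite h0 h1 h2.
  rewrite !exprMn -!mulrDr sa sa' !mulr1 hr hr'; lra.
have et : t = t' by apply: val_inj.
have er : r = r' by rewrite /r /r' eT.
rewrite -er in h0 h1 h2; rewrite -eT in hb00 hb11 hb22 hb01 hb02 hb12.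
have ea : r != 0 -> a = a'.
  move=> r0; apply: val_inj; apply: rowv3; exact: (mulfI r0).
have [T0|T0] := eqVneq T 0.
  apply: gq_eq; left; split => //; split; first by rewrite -/T' -eT.
  apply: ea; rewrite /r T0 subr0 sqrtr1; exact: oner_neq0.
have ey : y = y'.
  move: hb00 hb11 hb22 hb01 hb02 hb12; rewrite /bq.
  move=> /(mulfI T0) b00 /(mulfI T0) b11 /(mulfI T0) b22 /(mulfI T0) b01 /(mulfI T0) b02 /(mulfI T0) b12.
  have q0 : co (\val (repr y')) 0 ^+ 2 = co (\val (repr y)) 0 ^+ 2 by rewrite !expr2 b00.
  have q1 : co (\val (repr y')) 1 ^+ 2 = co (\val (repr y)) 1 ^+ 2 by rewrite !expr2 b11.
  have q2 : co (\val (repr y')) 2 ^+ 2 = co (\val (repr y)) 2 ^+ 2 by rewrite !expr2 b22.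
  have [e [e0 e1 e2]] := rank1 q0 q1 q2 (esym b01) (esym b02) (esym b12).
  exact: (y_eq e0 e1 e2).
have [T1|T1] := eqVneq T 1.
  apply: gq_eq; right; split => //; split => //; by rewrite -/T' -eT.
have r0 : r != 0.
  rewrite /r sqrtr_eq0 -ltNge subr_gt0 lt_neqAle T1; exact: t1.
by rewrite (ea r0) ey et.
Qed.
End JInj.

Section E1.
Variable R : realType.

Lemma sum0_3 (x0 x1 x2 : R) : x0 ^+ 2 + x1 ^+ 2 + x2 ^+ 2 = 0 -> [/\ x0 = 0, x1 = 0 & x2 = 0].
Proof.
move=> h.
have h0 : x0 ^+ 2 = 0 by have := sqr_ge0 x0; have := sqr_ge0 x1; have := sqr_ge0 x2; lra.
have h1 : x1 ^+ 2 = 0 by have := sqr_ge0 x0; have := sqr_ge0 x1; have := sqr_ge0 x2; lra.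
have h2 : x2 ^+ 2 = 0 by have := sqr_ge0 x0; have := sqr_ge0 x1; have := sqr_ge0 x2; lra.
by split; apply/eqP; rewrite -sqrf_eq0; apply/eqP.
Qed.

Lemma normalize3 (x0 x1 x2 : R) : exists y0 y1 y2 : R,
  [/\ y0 ^+ 2 + y1 ^+ 2 + y2 ^+ 2 = 1,
      (x0 ^+ 2 + x1 ^+ 2 + x2 ^+ 2 != 0 ->
        [/\ x0 = Num.sqrt (x0 ^+ 2 + x1 ^+ 2 + x2 ^+ 2) * y0,
            x1 = Num.sqrt (x0 ^+ 2 + x1 ^+ 2 + x2 ^+ 2) * y1 &
            x2 = Num.sqrt (x0 ^+ 2 + x1 ^+ 2 + x2 ^+ 2) * y2]) &
      (x0 ^+ 2 + x1 ^+ 2 + x2 ^+ 2 = 0 -> [/\ x0 = 0, x1 = 0 & x2 = 0])].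
Proof.
set S := x0 ^+ 2 + x1 ^+ 2 + x2 ^+ 2.
have S0 : 0 <= S by rewrite /S !addr_ge0 ?sqr_ge0.
have [SZ|SZ] := eqVneq S 0.
  exists 1, 0, 0; split => //; last by move=> _; exact: sum0_3.
  by rewrite expr1n expr0n /= !addr0.
set s := Num.sqrt S.
have sp : 0 < s by rewrite sqrtr_gt0 lt_neqAle eq_sym SZ.
have ss : s ^+ 2 = S by rewrite sqr_sqrtr.
have s0 : s != 0 by rewrite gt_eqF.
exists (x0 / s), (x1 / s), (x2 / s); split => //.
- rewrite !expr_div_n -!mulrDl -/S -ss mulfV //; by rewrite expf_neq0.
- by move=> _; split; rewrite mulrC divfK.
- by move=> h; rewrite h eqxx in SZ.
Qed.

Lemma E1core (p0 q0 p1 q1 p2 q2 : R) : 0 < NN p0 q0 p1 q1 p2 q2 ->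
  exists a0 a1 a2 b0 b1 b2 t : R,
  [/\ a0 ^+ 2 + a1 ^+ 2 + a2 ^+ 2 = 1, b0 ^+ 2 + b1 ^+ 2 + b2 ^+ 2 = 1, 0 <= t <= 1 &
      Phi p0 q0 p1 q1 p2 q2 = Zv (Num.sqrt (1 - t) * a0) (Num.sqrt (1 - t) * a1)
        (Num.sqrt (1 - t) * a2) (t * (b0 * b0)) (t * (b1 * b1)) (t * (b2 * b2))
        (t * (b0 * b1)) (t * (b0 * b2)) (t * (b1 * b2))].
Proof.
rewrite /Phi /NN.
set A0 := AA p0 q0; set A1 := AA p1 q1; set A2 := AA p2 q2.
set B0 := BB p0 q0; set B1 := BB p1 q1; set B2 := BB p2 q2.
set N := A0 ^+ 2 + B0 ^+ 2 + A1 ^+ 2 + B1 ^+ 2 + A2 ^+ 2 + B2 ^+ 2 => Np.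
have [a0 [a1 [a2 [sa hA hA0]]]] := normalize3 A0 A1 A2.
have [b0 [b1 [b2 [sb hB hB0]]]] := normalize3 B0 B1 B2.
set SA := A0 ^+ 2 + A1 ^+ 2 + A2 ^+ 2 in hA hA0.
set SB := B0 ^+ 2 + B1 ^+ 2 + B2 ^+ 2 in hB hB0.
have eN : N = SA + SB by rewrite /N /SA /SB; ring.
have SA0 : 0 <= SA by rewrite /SA !addr_ge0 ?sqr_ge0.
have SB0 : 0 <= SB by rewrite /SB !addr_ge0 ?sqr_ge0.
have N0 : N != 0 by rewrite gt_eqF.
exists a0, a1, a2, b0, b1, b2, (SB / N); split => //.
  apply/andP; split; first by rewrite divr_ge0 // ltW.
  by rewrite ler_pdivrMr // mul1r eN lerDr.
have e1t : 1 - SB / N = SA / N by rewrite eN; field; rewrite -eN.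
rewrite e1t.
have eA : forall A a : R, (SA != 0 -> A = Num.sqrt SA * a) -> (SA = 0 -> A = 0) ->
    A / Num.sqrt N = Num.sqrt (SA / N) * a.
  move=> A a h1 h2; have [SZ|SZ] := eqVneq SA 0.
    by rewrite h2 // SZ !mul0r sqrtr0 mul0r.
  rewrite h1 // sqrtrM // sqrtrV; last exact: ltW.
  by rewrite mulrAC.
have eB : forall B B' b b' : R, (SB != 0 -> B = Num.sqrt SB * b /\ B' = Num.sqrt SB * b') ->
    (SB = 0 -> B = 0) -> B * B' / N = SB / N * (b * b').
  move=> B B' b b' h1 h2; have [SZ|SZ] := eqVneq SB 0.
    by rewrite h2 // SZ !mul0r.
  have [-> ->] := h1 SZ.
  have ss : Num.sqrt SB * Num.sqrt SB = SB by rewrite -expr2 sqr_sqrtr.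
  transitivity ((Num.sqrt SB * Num.sqrt SB) * (b * b') / N); first ring.
  by rewrite ss mulrAC.
have B2e : forall B : R, B ^+ 2 = B * B by move=> B; rewrite expr2.
congr Zv; rewrite ?B2e.
- by apply: eA => [/hA []|/hA0 []].
- by apply: eA => [/hA []|/hA0 []].
- by apply: eA => [/hA []|/hA0 []].
- by apply: eB => [/hB [h _ _]|/hB0 []].
- by apply: eB => [/hB [_ h _]|/hB0 []].
- by apply: eB => [/hB [_ _ h]|/hB0 []].
- by apply: eB => [/hB [h h' _]|/hB0 []].
- by apply: eB => [/hB [h _ h']|/hB0 []].
- by apply: eB => [/hB [_ h h']|/hB0 []].
Qed.

Lemma csqrt (u w : R) : exists P Q : R,
  [/\ P ^+ 2 - Q ^+ 2 = u, 2 * P * Q = w & P ^+ 2 + Q ^+ 2 = Num.sqrt (u ^+ 2 + w ^+ 2)].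
Proof.
set rho := Num.sqrt (u ^+ 2 + w ^+ 2).
have r0 : 0 <= rho by rewrite sqrtr_ge0.
have r2 : rho ^+ 2 = u ^+ 2 + w ^+ 2 by rewrite sqr_sqrtr // addr_ge0 ?sqr_ge0.
have hp : 0 <= (rho + u) / 2 by apply: divr_ge0 => //; nra.
have hm : 0 <= (rho - u) / 2 by apply: divr_ge0 => //; nra.
set sg : R := if 0 <= w then 1 else -1.
exists (Num.sqrt ((rho + u) / 2)), (sg * Num.sqrt ((rho - u) / 2)).
have sg2 : sg ^+ 2 = 1 by rewrite /sg; case: ifP => _; rewrite ?sqrrN expr1n.
split.
- rewrite exprMn sg2 mul1r !sqr_sqrtr //; (field; try by rewrite ?pnatr_eq0).
- transitivity (2 * sg * (Num.sqrt ((rho + u) / 2) * Num.sqrt ((rho - u) / 2))); first ring.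
  rewrite -sqrtrM //.
  have -> : (rho + u) / 2 * ((rho - u) / 2) = (w / 2) ^+ 2.
    transitivity ((rho ^+ 2 - u ^+ 2) / 4); first (field; try by rewrite ?pnatr_eq0).
    rewrite r2; (field; try by rewrite ?pnatr_eq0).
  rewrite sqrtr_sqr /sg; case: ifP => hw.
    by rewrite ger0_norm ?divr_ge0 //; (field; try by rewrite ?pnatr_eq0).
  rewrite ltr0_norm; last by rewrite pmulr_llt0 ?invr_gt0 // ltNge hw.
  (field; try by rewrite ?pnatr_eq0).
- rewrite exprMn sg2 mul1r !sqr_sqrtr //; (field; try by rewrite ?pnatr_eq0).
Qed.

Lemma Phi_scale (c p0 q0 p1 q1 p2 q2 : R) : c != 0 ->
  Phi (c * p0) (c * q0) (c * p1) (c * q1) (c * p2) (c * q2) = Phi p0 q0 p1 q1 p2 q2.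
Proof.
move=> c0; rewrite /Phi.
have eA : forall p q : R, AA (c * p) (c * q) = c ^+ 2 * AA p q by move=> p q; rewrite /AA; ring.
have eB : forall p q : R, BB (c * p) (c * q) = c ^+ 2 * BB p q by move=> p q; rewrite /BB; ring.
rewrite /NN !eA !eB.
set N := (AA p0 q0 ^+ 2 + BB p0 q0 ^+ 2 + AA p1 q1 ^+ 2 + BB p1 q1 ^+ 2 + AA p2 q2 ^+ 2 + BB p2 q2 ^+ 2).
have -> : (c ^+ 2 * AA p0 q0) ^+ 2 + (c ^+ 2 * BB p0 q0) ^+ 2 + (c ^+ 2 * AA p1 q1) ^+ 2 +
  (c ^+ 2 * BB p1 q1) ^+ 2 + (c ^+ 2 * AA p2 q2) ^+ 2 + (c ^+ 2 * BB p2 q2) ^+ 2 =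
  (c ^+ 2) ^+ 2 * N by rewrite /N; ring.
have c2 : 0 <= c ^+ 2 by apply: sqr_ge0.
have c20 : c ^+ 2 != 0 by rewrite expf_neq0.
have c40 : (c ^+ 2) ^+ 2 != 0 by rewrite expf_neq0.
rewrite sqrtrM ?sqr_ge0 // sqrtr_sqr ger0_norm //.
have [N0|N0] := eqVneq N 0.
  by rewrite N0 sqrtr0 !mulr0 !invr0 !mulr0.
have sN0 : Num.sqrt N != 0 by rewrite sqrtr_eq0 -ltNge lt_neqAle eq_sym N0 /N !addr_ge0 ?sqr_ge0.
congr Zv; field; rewrite ?c20 ?c40 ?N0 ?sN0 //.
Qed.

Lemma E2core (a0 a1 a2 b0 b1 b2 t : R) :
  a0 ^+ 2 + a1 ^+ 2 + a2 ^+ 2 = 1 -> b0 ^+ 2 + b1 ^+ 2 + b2 ^+ 2 = 1 -> 0 <= t <= 1 ->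
  exists p0 q0 p1 q1 p2 q2 : R,
  p0 ^+ 2 + q0 ^+ 2 + p1 ^+ 2 + q1 ^+ 2 + p2 ^+ 2 + q2 ^+ 2 = 1 /\
  Phi p0 q0 p1 q1 p2 q2 = Zv (Num.sqrt (1 - t) * a0) (Num.sqrt (1 - t) * a1)
        (Num.sqrt (1 - t) * a2) (t * (b0 * b0)) (t * (b1 * b1)) (t * (b2 * b2))
        (t * (b0 * b1)) (t * (b0 * b2)) (t * (b1 * b2)).
Proof.
move=> sa sb /andP [t0 t1].
set r := Num.sqrt (1 - t); set z := Num.sqrt t.
have r2 : r ^+ 2 = 1 - t by rewrite sqr_sqrtr // subr_ge0.
have z2 : z ^+ 2 = t by rewrite sqr_sqrtr.
have [P0 [Q0 [hA0 hB0 hr0]]] := csqrt (r * a0) (z * b0).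
have [P1 [Q1 [hA1 hB1 hr1]]] := csqrt (r * a1) (z * b1).
have [P2 [Q2 [hA2 hB2 hr2]]] := csqrt (r * a2) (z * b2).
set rho0 := Num.sqrt _ in hr0; set rho1 := Num.sqrt _ in hr1; set rho2 := Num.sqrt _ in hr2.
have tot : (r * a0) ^+ 2 + (z * b0) ^+ 2 + ((r * a1) ^+ 2 + (z * b1) ^+ 2) +
           ((r * a2) ^+ 2 + (z * b2) ^+ 2) = 1.
  transitivity (r ^+ 2 * (a0 ^+ 2 + a1 ^+ 2 + a2 ^+ 2) + z ^+ 2 * (b0 ^+ 2 + b1 ^+ 2 + b2 ^+ 2)).
    by rewrite !exprMn; ring.
  by rewrite sa sb r2 z2 !mulr1 subrK.
have rr : forall x : R, 0 <= x -> Num.sqrt x ^+ 2 = x by move=> x hx; rewrite sqr_sqrtr.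
have g0 : 0 <= rho0 by rewrite sqrtr_ge0.
have g1 : 0 <= rho1 by rewrite sqrtr_ge0.
have g2 : 0 <= rho2 by rewrite sqrtr_ge0.
have q0 : rho0 ^+ 2 = (r * a0) ^+ 2 + (z * b0) ^+ 2 by rewrite rr // addr_ge0 ?sqr_ge0.
have q1 : rho1 ^+ 2 = (r * a1) ^+ 2 + (z * b1) ^+ 2 by rewrite rr // addr_ge0 ?sqr_ge0.
have q2 : rho2 ^+ 2 = (r * a2) ^+ 2 + (z * b2) ^+ 2 by rewrite rr // addr_ge0 ?sqr_ge0.
set S := rho0 + rho1 + rho2.
have Sp : 0 < S.
  have S0' : 0 <= S by rewrite /S; lra.
  rewrite lt_neqAle S0' andbT; apply/eqP => S0.
  have e0 : rho0 = 0 by rewrite /S in S0; lra.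
  have e1 : rho1 = 0 by rewrite /S in S0; lra.
  have e2 : rho2 = 0 by rewrite /S in S0; lra.
  move: tot; rewrite -q0 -q1 -q2 e0 e1 e2 expr0n /=; lra.
set c := (Num.sqrt S)^-1.
have c0 : c != 0 by rewrite invr_neq0 // sqrtr_eq0 -ltNge.
have c2 : c ^+ 2 = S^-1 by rewrite exprVn rr // ltW.
exists (c * P0), (c * Q0), (c * P1), (c * Q1), (c * P2), (c * Q2); split.
  transitivity (c ^+ 2 * ((P0 ^+ 2 + Q0 ^+ 2) + (P1 ^+ 2 + Q1 ^+ 2) + (P2 ^+ 2 + Q2 ^+ 2))).
    by rewrite !exprMn; ring.
  by rewrite hr0 hr1 hr2 -/S c2 mulVf // gt_eqF.
rewrite Phi_scale // /Phi /NN /AA /BB.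
rewrite hA0 hA1 hA2 hB0 hB1 hB2.
have tot' : (r * a0) ^+ 2 + (z * b0) ^+ 2 + (r * a1) ^+ 2 + (z * b1) ^+ 2 +
           (r * a2) ^+ 2 + (z * b2) ^+ 2 = 1 by rewrite -tot; ring.
rewrite tot' sqrtr1 !divr1.
have zz : forall x y : R, z * x * (z * y) = t * (x * y).
  by move=> x y; rewrite -z2; ring.
by rewrite !expr2 !zz.
Qed.
End E1.

Section Cpt.
Variable R : realType.

Lemma sumsq_cont n : continuous (fun v : 'rV[R]_n => \sum_(i < n) v ord0 i ^+ 2).
Proof.
have H : forall s : seq 'I_n, continuous (fun v : 'rV[R]_n => \sum_(i <- s) v ord0 i ^+ 2).
  elim=> [|i s IH].
    have -> : (fun v : 'rV[R]_n => \sum_(i <- [::]) v ord0 i ^+ 2) = (fun _ => 0).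
      by apply: funext => v; rewrite big_nil.
    exact: cst_continuous.
  have -> : (fun v : 'rV[R]_n => \sum_(j <- i :: s) v ord0 j ^+ 2) =
    (fun v => v ord0 i ^+ 2 + \sum_(j <- s) v ord0 j ^+ 2).
    by apply: funext => v; rewrite big_cons.
  apply: cD => //; apply: cX; exact: coord_continuous.
exact: H.
Qed.

Lemma sphere_compact n : compact [set: sphere R n].
Proof.
apply: compact_set_type; apply: bounded_closed_compact.
  exists 1; split; first by rewrite num_real.
  move=> M M1 v; rewrite /sphere_set /= => hv.
  rewrite [leLHS]/Num.norm /= mx_normrE; apply: bigmax_le; first exact: ltW (lt_trans ltr01 M1).
  move=> [i j] _ /=; rewrite (ord1 i).
  have : v ord0 j ^+ 2 <= 1.
    rewrite -hv (bigD1 j) //= lerDl; apply: sumr_ge0 => k _; exact: sqr_ge0.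
  move=> h; apply: ltW; apply: (le_lt_trans _ M1).
  have := normr_ge0 (v ord0 j); rewrite -real_normK ?num_real // in h; nra.
have -> : sphere_set R n = (fun v : 'rV[R]_n => \sum_(i < n) v ord0 i ^+ 2) @^-1` [set x | x = 1].
  by [].
apply: closed_comp; last exact: closed_eq.
by move=> v _; exact: sumsq_cont.
Qed.

Lemma image_compact (A B : topologicalType) (f : A -> B) :
  continuous f -> (forall b, exists a, f a = b) -> compact [set: A] -> compact [set: B].
Proof.
move=> cf sf cA.
have E : f @` [set: A] = [set: B].
  by apply/seteqP; split => // b _; have [a fa] := sf b; exists a.
rewrite -E; apply: continuous_compact => //; apply: continuous_subspaceT => x hx; exact: cf.
Qed.

Lemma RP_compact n : compact [set: RP R n].
Proof.
apply: (image_compact (f := \pi_(RP R n))).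
- exact: gq_pi_cont.
- by move=> b; exists (repr b); rewrite reprK.
- exact: sphere_compact.
Qed.

Lemma I_compact : compact [set: unit_interval R].
Proof.
apply: compact_set_type.
have -> : unit_interval_set R = `[(0:R), 1]%classic.
  by apply/seteqP; split => x; rewrite /= in_itv.
exact: segment_compact.
Qed.

Lemma join_compact : compact [set: join R (sphere R 3) (RP R 3)].
Proof.
apply: (image_compact (f := \pi_(join R (sphere R 3) (RP R 3)))).
- exact: gq_pi_cont.
- by move=> b; exists (repr b); rewrite reprK.
- rewrite -setXTT; apply: compact_setX; first exact: sphere_compact.
  rewrite -setXTT; apply: compact_setX; [exact: RP_compact|exact: I_compact].
Qed.

Lemma orbit_compact : compact [set: orbit_space R].
Proof.
apply: (image_compact (f := \pi_(orbit_space R))).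
- exact: gq_pi_cont.
- by move=> b; exists (repr b); rewrite reprK.
- exact: RP_compact.
Qed.
End Cpt.

Section Final.
Variable R : realType.

Definition vec3 (a0 a1 a2 : R) : Rn R 3 := \row_(i < 3) nth 0 [:: a0; a1; a2] i.
Lemma co_vec3 a0 a1 a2 k : (k < 3)%N -> co (vec3 a0 a1 a2) k = nth 0 [:: a0; a1; a2] k.
Proof. by move=> hk; rewrite /co mxE inordK. Qed.

Lemma vec3_sphere (a0 a1 a2 : R) : a0 ^+ 2 + a1 ^+ 2 + a2 ^+ 2 = 1 ->
  vec3 a0 a1 a2 \in sphere_set R 3.
Proof.
by move=> h; rewrite inE /sphere_set /= sum3E !mxE !inordK.
Qed.

Definition mkS3 a0 a1 a2 (h : a0 ^+ 2 + a1 ^+ 2 + a2 ^+ 2 = 1) : sphere R 3 :=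
  exist _ (vec3 a0 a1 a2) (vec3_sphere h).

Definition vec6 (p0 q0 p1 q1 p2 q2 : R) : Rn R 6 :=
  \row_(i < 6) nth 0 [:: p0; p1; p2; q2; q1; q0] i.
Lemma co_vec6 p0 q0 p1 q1 p2 q2 k : (k < 6)%N ->
  co (vec6 p0 q0 p1 q1 p2 q2) k = nth 0 [:: p0; p1; p2; q2; q1; q0] k.
Proof. by move=> hk; rewrite /co mxE inordK. Qed.

Lemma vec6_sphere (p0 q0 p1 q1 p2 q2 : R) :
  p0 ^+ 2 + q0 ^+ 2 + p1 ^+ 2 + q1 ^+ 2 + p2 ^+ 2 + q2 ^+ 2 = 1 ->
  vec6 p0 q0 p1 q1 p2 q2 \in sphere_set R 6.
Proof.
move=> h; rewrite inE /sphere_set /= sum6E !mxE !inordK //= -h; ring.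
Qed.

Definition mkS6 p0 q0 p1 q1 p2 q2 (h : p0 ^+ 2 + q0 ^+ 2 + p1 ^+ 2 + q1 ^+ 2 + p2 ^+ 2 + q2 ^+ 2 = 1)
  : sphere R 6 := exist _ (vec6 p0 q0 p1 q1 p2 q2) (vec6_sphere h).

Lemma mkI_mem (t : R) : 0 <= t <= 1 -> (t : R^o) \in unit_interval_set R.
Proof. by move=> h; rewrite inE. Qed.

Definition mkI t (h : 0 <= t <= 1) : unit_interval R := exist _ (t : R^o) (mkI_mem h).

Lemma E1 (o : orbit_space R) : exists j, psi_J j = phi_orb o.
Proof.
have [x ->] := orb_surj o.
rewrite phi_orb_pi /phi_sph /phiv.
have [a0 [a1 [a2 [b0 [b1 [b2 [t [sa sb ht ->]]]]]]]] := E1core (NN_pos (sphere6 x)).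
exists (\pi_(join R (sphere R 3) (RP R 3)) (mkS3 sa, (\pi_(RP R 3) (mkS3 sb), mkI ht))).
by rewrite psi_J_pi /psi_prod /psiv /= !bq_pi /= !co_vec3.
Qed.

Lemma E2 (j : join R (sphere R 3) (RP R 3)) : exists o, phi_orb o = psi_J j.
Proof.
have [[a [y t]] ->] := join_surj j.
rewrite psi_J_pi /psi_prod /psiv /bq /=.
have [p0 [q0 [p1 [q1 [p2 [q2 [hs e]]]]]]] := E2core (sphere3 a) (sphere3 (repr y)) (I_bounds t).
exists (\pi_(orbit_space R) (\pi_(RP R 6) (mkS6 hs))).
by rewrite phi_orb_pi /phi_sph /phiv /= !co_vec6 // e.
Qed.

Theorem main : homeomorphic (orbit_space R) (join R (sphere R 3) (RP R 3)).
Proof.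
apply: (homeo_emb (phi := @phi_orb R) (psi := @psi_J R)).
- exact: phi_orb_cont.
- exact: psi_J_cont.
- exact: phi_orb_inj.
- exact: psi_J_inj.
- exact: orbit_compact.
- exact: join_compact.
- exact: norm_hausdorff.
- exact: E1.
- exact: E2.
Qed.
End Final.


Local Close Scope ring_scope.
Local Close Scope classical_set_scope.
Local Close Scope quotient_scope.

Theorem mainTheorem18 (R : realType) :
  homeomorphic (orbit_space R) (join R (sphere R 3) (RP R 3)).
Proof. exact: main. Qed.
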